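(* Let $M=(r,q,u)$ be an IC and IR mechanism. (1) If $M$ is undominated, then $M$ is floor-randomized, left continuous, and satisfies DD. (2) If $M$ is dominated, then $M$ is dominated by a mechanism that is floor-randomized, left continuous and satisfies DD.
   Context: Setting. Let $\Theta=[\underline\theta,\overline\theta]$ with $0<\underline\theta<\overline\theta$. Let $c>0$ and let $P:\mathbb R_+\to\mathbb R_+$ be continuous and strictly decreasing with $P(\overline q)=0$ for some $\overline q>0$. Put $V(q)=\int_0^q P(z)\,dz$ and $\mathrm{TS}(\theta,q)=V(q)-c-\theta q$ for $q>0$, $\mathrm{TS}(\theta,0)=0$. Assume (A2): $\mathrm{TS}(\overline\theta,P^{-1}(\overline\theta))>0$. A mechanism is a triple $M=(r,q,u)$ of functions $r:\Theta\to[0,1]$, $q:\Theta\to[0,\overline q]$, $u:\Theta\to\mathbb R$ with $q(\theta)=0$ if and only if $r(\theta)=0$. It is IC if $u(\theta)\ge u(\theta')+(\theta'-\theta)q(\theta')r(\theta')$ for all $\theta,\theta'\in\Theta$, and IR if $u(\theta)\ge 0$ for all $\theta$. (Known fact: $M$ is IC iff $\theta\mapsto q(\theta)r(\theta)$ is nonincreasing and $u(\theta)=u(\overline\theta)+\int_\theta^{\overline\theta}q(z)r(z)\,dz$ for all $\theta$; an IC mechanism is IR iff $u(\overline\theta)\ge0$.) Fix $\alpha\in[0,1)$. The regulator's surplus at $\theta$ is $\mathrm{RS}_\alpha(\theta,M)=r(\theta)\,\mathrm{TS}(\theta,q(\theta))-(1-\alpha)u(\theta)$. An IC and IR mechanism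 $\tilde M$ dominates an IC and IR mechanism $M$ if $\mathrm{RS}_\alpha(\theta,\tilde M)\ge \mathrm{RS}_\alpha(\theta,M)$ for all $\theta\in\Theta$ with strict inequality for some $\theta$; $M$ is undominated if it is IC, IR and not dominated by any IC and IR mechanism. The quantity floor $\hat q$ is the unique $q>0$ with $V(q)-qP(q)=c$. A mechanism $(r,q,u)$ is floor-randomized if it is IC, IR, $u(\overline\theta)=0$, and $\Theta$ can be partitioned into three pairwise disjoint (possibly empty) intervals $\Theta_1,\Theta_{01},\Theta_0$, with every element of $\Theta_0$ larger than every element of $\Theta_{01}$ and every element of $\Theta_{01}$ larger than every element of $\Theta_1$, such that: $q(\theta)\ge\hat q$ and $r(\theta)=1$ for $\theta\in\Theta_1$; $q(\theta)=\hat q$ and $r(\theta)\in(0,1)$ for $\theta\in\Theta_{01}$; $q(\theta)=r(\theta)=0$ for $\theta\in\Theta_0$. The efficient quantity is $q_e(\theta)=P^{-1}(\theta)$. A mechanism satisfies downward distortion (DD) if $q(\theta)\le q_e(\theta)$ for all $\theta$, with equality at $\theta=\underline\theta$; it satisfies strict DD if moreover $q(\theta)<q_e(\theta)$ for every $\theta>\underline\theta$. A mechanism is left continuous if $\theta\mapsto q(\theta)r(\theta)$ is left continuous at every $\theta\in(\underline\theta,\overline\theta]$. *)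

(* Defs.v *)
From Stdlib Require Import Reals.
From Coquelicot Require Import Coquelicot.
Open Scope R_scope.

Definition inTheta (tlo thi t : R) : Prop := tlo <= t <= thi.

Definition V (P : R -> R) (q : R) : R := RInt P 0 q.

Definition TS (P : R -> R) (c t q : R) : R :=
  match Rlt_dec 0 q with
  | left _ => V P q - c - t * q
  | right _ => 0
  end.

(* A mechanism (r,q,u): functions on R, only their values on Theta matter. *)
Definition is_mechanism (tlo thi qbar : R) (r q u : R -> R) : Prop :=
  forall t, inTheta tlo thi t ->
    0 <= r t <= 1 /\ 0 <= q t <= qbar /\ (q t = 0 <-> r t = 0).

Definition IC (tlo thi : R) (r q u : R -> R) : Prop :=
  forall t t', inTheta tlo thi t -> inTheta tlo thi t' ->
    u t >= u t' + (t' - t) * q t' * r t'.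

Definition IR (tlo thi : R) (u : R -> R) : Prop :=
  forall t, inTheta tlo thi t -> u t >= 0.

Definition ICIR (tlo thi qbar : R) (r q u : R -> R) : Prop :=
  is_mechanism tlo thi qbar r q u /\ IC tlo thi r q u /\ IR tlo thi u.

Definition RS (P : R -> R) (c alpha : R) (r q u : R -> R) (t : R) : R :=
  r t * TS P c t (q t) - (1 - alpha) * u t.

Definition dominates (tlo thi qbar : R) (P : R -> R) (c alpha : R)
    (r' q' u' r q u : R -> R) : Prop :=
  ICIR tlo thi qbar r' q' u' /\ ICIR tlo thi qbar r q u /\
  (forall t, inTheta tlo thi t -> RS P c alpha r' q' u' t >= RS P c alpha r q u t) /\
  (exists t, inTheta tlo thi t /\ RS P c alpha r' q' u' t > RS P c alpha r q u t).

Definition dominated (tlo thi qbar : R) (P : R -> R) (c alpha : R)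
    (r q u : R -> R) : Prop :=
  exists r' q' u' : R -> R, dominates tlo thi qbar P c alpha r' q' u' r q u.

Definition undominated (tlo thi qbar : R) (P : R -> R) (c alpha : R)
    (r q u : R -> R) : Prop :=
  ICIR tlo thi qbar r q u /\ ~ dominated tlo thi qbar P c alpha r q u.

Definition is_interval (I : R -> Prop) : Prop :=
  forall x y z, I x -> I y -> x <= z <= y -> I z.

Definition floor_randomized (tlo thi qbar qhat : R) (r q u : R -> R) : Prop :=
  ICIR tlo thi qbar r q u /\ u thi = 0 /\
  exists T1 T01 T0 : R -> Prop,
    is_interval T1 /\ is_interval T01 /\ is_interval T0 /\
    (forall t, inTheta tlo thi t <-> (T1 t \/ T01 t \/ T0 t)) /\
    (forall t, ~ (T1 t /\ T01 t)) /\ (forall t, ~ (T1 t /\ T0 t)) /\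
    (forall t, ~ (T01 t /\ T0 t)) /\
    (forall x y, T0 x -> T01 y -> y < x) /\
    (forall x y, T01 x -> T1 y -> y < x) /\
    (forall t, T1 t -> q t >= qhat /\ r t = 1) /\
    (forall t, T01 t -> q t = qhat /\ 0 < r t < 1) /\
    (forall t, T0 t -> q t = 0 /\ r t = 0).

(* Downward distortion relative to the efficient quantity qe = P^{-1}. *)
Definition DD (tlo thi : R) (qe q : R -> R) : Prop :=
  (forall t, inTheta tlo thi t -> q t <= qe t) /\ q tlo = qe tlo.

Definition strict_DD (tlo thi : R) (qe q : R -> R) : Prop :=
  DD tlo thi qe q /\ (forall t, tlo < t <= thi -> q t < qe t).

Definition left_continuous (tlo thi : R) (r q : R -> R) : Prop :=
  forall t, tlo < t <= thi ->
    filterlim (fun s => q s * r s) (at_left t) (locally (q t * r t)).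

(* Main.v *)
Require Import Defs.
From Stdlib Require Import Reals Lra List.
From Coquelicot Require Import Coquelicot.
Open Scope R_scope.


Lemma ball_R (x y e : R) : ball x e y <-> Rabs (y - x) < e.
Proof. reflexivity. Qed.

Definition clampf (qbar x : R) := Rmax 0 (Rmin qbar x).

Lemma clamp_in qbar x : 0 < qbar -> 0 <= clampf qbar x <= qbar.
Proof. intros H; unfold clampf, Rmax, Rmin; repeat destruct Rle_dec; lra. Qed.

Lemma clamp_id qbar x : 0 <= x <= qbar -> clampf qbar x = x.
Proof. intros H; unfold clampf, Rmax, Rmin; repeat destruct Rle_dec; lra. Qed.

Lemma clamp_lip qbar x y : 0 < qbar -> Rabs (clampf qbar y - clampf qbar x) <= Rabs (y - x).
Proof.
  intros H; unfold clampf, Rmax, Rmin; repeat destruct Rle_dec;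
  unfold Rabs; repeat destruct Rcase_abs; lra.
Qed.

Lemma Pc_cont (P : R -> R) qbar (Hq : 0 < qbar)
  (HPcont : forall x, 0 <= x <= qbar ->
     filterlim P (within (fun y => 0 <= y <= qbar) (locally x)) (locally (P x))) :
  forall z, continuous (fun x => P (clampf qbar x)) z.
Proof.
  intros z. unfold continuous.
  apply (filterlim_comp _ _ _ (clampf qbar) P _ (within (fun y => 0 <= y <= qbar) (locally (clampf qbar z)))).
  - intros Q [e He]. exists e. intros y Hy. apply He.
    rewrite ball_R in *. eapply Rle_lt_trans. apply clamp_lip; auto. exact Hy.
    apply clamp_in; auto.
  - apply HPcont. apply clamp_in; auto.
Qed.

Lemma exP (P : R -> R) qbar (Hq : 0 < qbar)
  (HPcont : forall x, 0 <= x <= qbar ->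
     filterlim P (within (fun y => 0 <= y <= qbar) (locally x)) (locally (P x))) :
  forall a b, 0 <= a <= b -> b <= qbar -> ex_RInt P a b.
Proof.
  intros a b Hab Hb.
  apply (ex_RInt_ext (fun x => P (clampf qbar x))).
  - intros x Hx. rewrite Rmin_left in Hx by lra. rewrite Rmax_right in Hx by lra.
    rewrite clamp_id; auto; lra.
  - apply (@ex_RInt_continuous R_CompleteNormedModule). intros; apply Pc_cont; auto.
Qed.

Lemma KEY (P : R -> R) qbar (Hq : 0 < qbar)
  (HPcont : forall x, 0 <= x <= qbar ->
     filterlim P (within (fun y => 0 <= y <= qbar) (locally x)) (locally (P x)))
  (HPdec : forall x y, 0 <= x -> x < y -> y <= qbar -> P y < P x) :
  forall a b, 0 <= a -> a < b -> b <= qbar ->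
    (b - a) * P b < V P b - V P a < (b - a) * P a.
Proof.
  intros a b Ha Hab Hb.
  assert (Hle : forall a b, 0 <= a -> a <= b -> b <= qbar ->
     (b - a) * P b <= RInt P a b <= (b - a) * P a).
  { intros a0 b0 H0 H1 H2. split.
    - replace ((b0 - a0) * P b0) with (RInt (fun _ => P b0) a0 b0).
      2:{ rewrite RInt_const. reflexivity. }
      apply RInt_le; auto. apply ex_RInt_const. apply (exP P qbar); auto; lra.
      intros x Hx. left; apply HPdec; lra.
    - replace ((b0 - a0) * P a0) with (RInt (fun _ => P a0) a0 b0).
      2:{ rewrite RInt_const. reflexivity. }
      apply RInt_le; auto. apply (exP P qbar); auto; lra. apply ex_RInt_const.
      intros x Hx. left; apply HPdec; lra. }
  set (m := (a + b) / 2).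
  assert (E1 : V P b - V P a = RInt P a m + RInt P m b).
  { unfold V. rewrite <- (RInt_Chasles P 0 a b).
    2: apply (exP P qbar); auto; lra. 2: apply (exP P qbar); auto; lra.
    rewrite <- (RInt_Chasles P a m b). 2: apply (exP P qbar); unfold m; auto; lra.
    2: apply (exP P qbar); unfold m; auto; lra. unfold plus; simpl. ring. }
  rewrite E1.
  destruct (Hle a m) as [A1 A2]; unfold m; try lra.
  destruct (Hle m b) as [B1 B2]; unfold m; try lra.
  fold m in A1, A2, B1, B2.
  assert (P b < P m) by (apply HPdec; unfold m; lra).
  assert (P m < P a) by (apply HPdec; unfold m; lra).
  assert (m - a > 0) by (unfold m; lra). assert (b - m > 0) by (unfold m; lra).
  replace (b - a) with ((m - a) + (b - m)) by ring.
  assert ((m - a) * (P m - P b) > 0) by (apply Rmult_lt_0_compat; lra).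
  assert ((b - m) * (P a - P m) > 0) by (apply Rmult_lt_0_compat; lra).
  fold m. split; lra.
Qed.

Definition KEYP (P : R -> R) qbar := forall a b, 0 <= a -> a < b -> b <= qbar ->
    (b - a) * P b < V P b - V P a < (b - a) * P a.

Definition W (P : R -> R) c qhat t y :=
  if Rlt_dec 0 y then y / Rmax y qhat * (V P (Rmax y qhat) - c - t * Rmax y qhat) else 0.


Lemma G_ge P qbar c qhat (HK : KEYP P qbar)
  (HPdec : forall x y, 0 <= x -> x < y -> y <= qbar -> P y < P x)
  (Hqhat : 0 < qhat <= qbar /\ V P qhat - qhat * P qhat = c) q1 :
  qhat <= q1 <= qbar -> V P q1 - q1 * P q1 >= c.
Proof.
  intros H. destruct Hqhat as [Hq Hc].
  destruct (Req_dec q1 qhat) as [->|Hne]; [lra|].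
  destruct (HK qhat q1) as [K1 K2]; try lra.
  assert (P q1 < P qhat) by (apply HPdec; lra).
  assert (qhat * (P qhat - P q1) > 0) by (apply Rmult_lt_0_compat; lra).
  nra.
Qed.

Lemma hH1 P qbar c qhat (HK : KEYP P qbar)
  (HPdec : forall x y, 0 <= x -> x < y -> y <= qbar -> P y < P x)
  (Hqhat : 0 < qhat <= qbar /\ V P qhat - qhat * P qhat = c) q1 q2 :
  qhat <= q1 -> q1 < q2 -> q2 <= qbar -> (V P q2 - c) * q1 < (V P q1 - c) * q2.
Proof.
  intros A B C.
  assert (G := G_ge P qbar c qhat HK HPdec Hqhat q1 ltac:(lra)).
  destruct (HK q1 q2) as [K1 K2]; try lra.
  assert (q1 * ((q2 - q1) * P q1 - (V P q2 - V P q1)) > 0) by (apply Rmult_lt_0_compat; lra).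
  assert ((q2 - q1) * (V P q1 - q1 * P q1 - c) >= 0).
  { apply Rle_ge, Rmult_le_pos; lra. }
  nra.
Qed.

Lemma hH2 P qbar c qhat (HK : KEYP P qbar)
  (Hqhat : 0 < qhat <= qbar /\ V P qhat - qhat * P qhat = c) q :
  0 < q -> q < qhat -> (V P q - c) * qhat < (V P qhat - c) * q.
Proof.
  intros A B. destruct Hqhat as [Hq Hc].
  destruct (HK q qhat) as [K1 K2]; try lra.
  assert (qhat * (q * P qhat - (V P q - c)) > 0) by (apply Rmult_lt_0_compat; lra).
  nra.
Qed.

Lemma hmax P qbar c qhat (HK : KEYP P qbar)
  (HPdec : forall x y, 0 <= x -> x < y -> y <= qbar -> P y < P x)
  (Hqhat : 0 < qhat <= qbar /\ V P qhat - qhat * P qhat = c) x q :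
  0 < x -> x <= q -> q <= qbar ->
  (V P q - c) * Rmax x qhat <= (V P (Rmax x qhat) - c) * q /\
  (q <> Rmax x qhat -> (V P q - c) * Rmax x qhat < (V P (Rmax x qhat) - c) * q).
Proof.
  intros A B C. unfold Rmax. destruct (Rle_dec x qhat) as [Hx|Hx].
  - destruct (Rtotal_order q qhat) as [Hl|[He|Hg]].
    + assert (Hs := hH2 P qbar c qhat HK Hqhat q ltac:(lra) Hl). split; intros; lra.
    + subst. split; intros; [lra| congruence].
    + assert (Hs := hH1 P qbar c qhat HK HPdec Hqhat qhat q ltac:(lra) Hg C). split; intros; lra.
  - destruct (Req_dec q x) as [->|Hne].
    + split; intros; [lra|congruence].
    + assert (Hs := hH1 P qbar c qhat HK HPdec Hqhat x q ltac:(lra) ltac:(lra) C). split; intros; lra.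
Qed.

Lemma C1 P qbar c qhat (HK : KEYP P qbar)
  (HPdec : forall x y, 0 <= x -> x < y -> y <= qbar -> P y < P x)
  (Hqhat : 0 < qhat <= qbar /\ V P qhat - qhat * P qhat = c) t q r :
  0 < q -> q <= qbar -> 0 < r -> r <= 1 ->
  r * TS P c t q <= W P c qhat t (q * r) /\
  (r * TS P c t q = W P c qhat t (q * r) -> q = Rmax (q * r) qhat).
Proof.
  intros A B C D.
  assert (Hx : 0 < q * r) by (apply Rmult_lt_0_compat; lra).
  assert (Hxq : q * r <= q) by nra.
  destruct (hmax P qbar c qhat HK HPdec Hqhat (q * r) q Hx Hxq B) as [M1 M2].
  set (m := Rmax (q * r) qhat) in *.
  assert (Hm : 0 < m) by (unfold m; unfold Rmax; destruct Rle_dec; lra).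
  unfold W, TS. destruct (Rlt_dec 0 q); [|lra]. destruct (Rlt_dec 0 (q * r)); [|lra].
  fold m.
  assert (E : q * r / m * (V P m - c - t * m) = r * ((V P m - c) * q) / m - t * (q * r)).
  { field. lra. }
  rewrite E.
  assert (E2 : r * (V P q - c - t * q) = r * ((V P q - c) * m) / m - t * (q * r)).
  { field. lra. }
  rewrite E2.
  split.
  - apply Rplus_le_compat_r. unfold Rdiv. apply Rmult_le_compat_r.
    left; apply Rinv_0_lt_compat; lra. apply Rmult_le_compat_l; lra.
  - intros Heq. destruct (Req_dec q m) as [|Hne]; auto.
    exfalso. specialize (M2 Hne).
    assert (r * ((V P q - c) * m) / m < r * ((V P m - c) * q) / m).
    { unfold Rdiv. apply Rmult_lt_compat_r. apply Rinv_0_lt_compat; lra.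
      apply Rmult_lt_compat_l; lra. }
    lra.
Qed.

Lemma qe_gt P qbar c qhat (HK : KEYP P qbar)
  (HPdec : forall x y, 0 <= x -> x < y -> y <= qbar -> P y < P x)
  (Hqhat : 0 < qhat <= qbar /\ V P qhat - qhat * P qhat = c) thi y :
  0 <= y <= qbar -> P y = thi -> TS P c thi y > 0 -> qhat < y.
Proof.
  intros A B C. unfold TS in C. destruct (Rlt_dec 0 y); [|lra].
  destruct (Rlt_le_dec qhat y) as [|Hle]; auto. exfalso.
  destruct Hqhat as [Hq Hc].
  assert (K : V P qhat - V P y >= (qhat - y) * P qhat).
  { destruct (Req_dec y qhat) as [->|Hn]. lra. destruct (HK y qhat); lra. }
  assert (Pl : P qhat <= P y).
  { destruct (Req_dec y qhat) as [->|Hn]. lra. left; apply HPdec; lra. }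
  subst thi.
  assert (y * (P y - P qhat) >= 0) by (apply Rle_ge, Rmult_le_pos; lra).
  nra.
Qed.

Lemma W_low P c qhat t y (Hqhat : 0 < qhat /\ V P qhat - qhat * P qhat = c) :
  0 <= y <= qhat -> W P c qhat t y = y * (P qhat - t).
Proof.
  intros H. unfold W. destruct (Rlt_dec 0 y).
  - rewrite Rmax_right by lra. destruct Hqhat as [Hq Hc].
    replace (V P qhat) with (c + qhat * P qhat) by lra. field. lra.
  - replace y with 0 by lra. ring.
Qed.

Lemma W_high P c qhat t y (Hq : 0 < qhat) :
  qhat <= y -> W P c qhat t y = V P y - c - t * y.
Proof.
  intros H. unfold W. destruct (Rlt_dec 0 y); [|lra].
  rewrite Rmax_left by lra. field. lra.
Qed.

Lemma Wmono1 P qbar c qhat (HK : KEYP P qbar)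
  (HPdec : forall x y, 0 <= x -> x < y -> y <= qbar -> P y < P x)
  (Hqhat : 0 < qhat <= qbar /\ V P qhat - qhat * P qhat = c) t e :
  qhat < e -> e <= qbar -> P e = t ->
  forall y1 y2, 0 <= y1 -> y1 < y2 -> y2 <= e -> W P c qhat t y1 < W P c qhat t y2.
Proof.
  intros A B C y1 y2 D E F.
  assert (Hq2 : 0 < qhat /\ V P qhat - qhat * P qhat = c) by lra.
  assert (Pt : t < P qhat) by (subst; apply HPdec; lra).
  assert (Hhigh : forall a b, qhat <= a -> a < b -> b <= e -> W P c qhat t a < W P c qhat t b).
  { intros a b Ha Hab Hb. rewrite !W_high by lra.
    destruct (HK a b) as [K1 K2]; try lra.
    assert (P e <= P b).
    { destruct (Req_dec b e) as [->|]; [lra|]. left; apply HPdec; lra. }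
    assert ((b - a) * (P b - t) >= 0) by (apply Rle_ge, Rmult_le_pos; lra). nra. }
  destruct (Rle_dec y2 qhat).
  - rewrite !W_low by lra. nra.
  - destruct (Rle_dec y1 qhat).
    + assert (W P c qhat t y1 <= W P c qhat t qhat).
      { rewrite !W_low by lra. nra. }
      assert (W P c qhat t qhat < W P c qhat t y2) by (apply Hhigh; lra). lra.
    + apply Hhigh; lra.
Qed.

Lemma Wmono2 P qbar c qhat (HK : KEYP P qbar)
  (Hqhat : 0 < qhat <= qbar /\ V P qhat - qhat * P qhat = c) t e :
  qhat < e -> P e = t ->
  forall y, e < y -> y <= qbar -> W P c qhat t y < W P c qhat t e.
Proof.
  intros A B y C D. rewrite !W_high by lra.
  destruct (HK e y) as [K1 K2]; try lra. subst. nra.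
Qed.

Fixpoint csum (f : R -> R) (a : R) (l : list R) : R :=
  match l with nil => 0 | c :: l' => (c - a) * f c + csum f c l' end.
Fixpoint clast (a : R) (l : list R) : R :=
  match l with nil => a | c :: l' => clast c l' end.
Fixpoint cinc (a : R) (l : list R) : Prop :=
  match l with nil => True | c :: l' => a < c /\ cinc c l' end.

Lemma clast_ge a l : cinc a l -> a <= clast a l.
Proof. revert a; induction l as [|c l IH]; simpl; intros a H. lra.
  destruct H as [H1 H2]. specialize (IH c H2). lra. Qed.

Lemma cs_bound f l : forall a, cinc a l ->
  (forall s t, a <= s -> s <= t -> t <= clast a l -> 0 <= f t <= f s) ->
  0 <= csum f a l <= (clast a l - a) * f a.
Proof.
  induction l as [|c l IH]; simpl; intros a H Hf. lra.
  destruct H as [H1 H2]. assert (Hl := clast_ge c l H2).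
  destruct (IH c H2) as [I1 I2].
  { intros s t Hs Hst Ht. apply Hf; lra. }
  assert (F1 := Hf a c ltac:(lra) ltac:(lra) ltac:(lra)).
  assert (F2 := Hf c c ltac:(lra) ltac:(lra) ltac:(lra)).
  assert ((c - a) * f c >= 0) by (apply Rle_ge, Rmult_le_pos; lra).
  assert ((clast c l - c) * (f a - f c) >= 0) by (apply Rle_ge, Rmult_le_pos; lra).
  assert ((c - a) * (f a - f c) >= 0) by (apply Rle_ge, Rmult_le_pos; lra).
  split; nra.
Qed.

Lemma cs_split f l : forall a b, cinc a l -> a < b -> b <= clast a l ->
  (forall s t, a <= s -> s <= t -> t <= clast a l -> 0 <= f t <= f s) ->
  exists l', cinc b l' /\ clast b l' = clast a l /\ csum f a l <= (b - a) * f a + csum f b l'.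
Proof.
  induction l as [|c l IH]; simpl; intros a b H Hab Hb Hf. lra.
  destruct H as [H1 H2]. assert (Hl := clast_ge c l H2).
  destruct (Rtotal_order c b) as [Hcb|[Hcb|Hcb]].
  - destruct (IH c b H2 Hcb Hb) as [l' [L1 [L2 L3]]].
    { intros s t Hs Hst Ht. apply Hf; lra. }
    exists l'. split; auto. split; auto.
    assert (F1 := Hf a c ltac:(lra) ltac:(lra) ltac:(lra)).
    assert ((c - a) * (f a - f c) >= 0) by (apply Rle_ge, Rmult_le_pos; lra).
    assert ((b - c) * (f a - f c) >= 0) by (apply Rle_ge, Rmult_le_pos; lra).
    nra.
  - subst c. exists l. split; auto. split; auto.
    assert (F1 := Hf a b ltac:(lra) ltac:(lra) ltac:(lra)).
    assert ((b - a) * (f a - f b) >= 0) by (apply Rle_ge, Rmult_le_pos; lra). nra.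
  - exists (c :: l). simpl. split; [split; auto|]. split; auto.
    assert (F1 := Hf a c ltac:(lra) ltac:(lra) ltac:(lra)).
    assert ((b - a) * (f a - f c) >= 0) by (apply Rle_ge, Rmult_le_pos; lra). nra.
Qed.

Lemma cs_tele f g lo hi l : forall a, cinc a l -> lo <= a -> clast a l <= hi ->
  (forall a b, lo <= a -> a < b -> b <= hi -> (b - a) * f b <= g a - g b) ->
  csum f a l <= g a - g (clast a l).
Proof.
  induction l as [|c l IH]; simpl; intros a H Ha Hh Hg. lra.
  destruct H as [H1 H2]. assert (Hl := clast_ge c l H2).
  specialize (IH c H2 ltac:(lra) Hh Hg).
  specialize (Hg a c Ha H1 ltac:(lra)). lra.
Qed.

Lemma glb_props (E : R -> Prop) m y0 : E y0 -> (forall y, E y -> m <= y) ->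
  (forall y, E y -> real (Glb_Rbar E) <= y) /\ m <= real (Glb_Rbar E) /\
  (forall eps, 0 < eps -> exists y, E y /\ y < real (Glb_Rbar E) + eps).
Proof.
  intros H0 Hm. destruct (Glb_Rbar_correct E) as [Hlb Hgl].
  assert (Hfin : Rbar_le m (Glb_Rbar E)) by (apply Hgl; intros y Hy; apply Hm; auto).
  assert (Hup := Hlb y0 H0).
  destruct (Glb_Rbar E) as [g| |] eqn:Eg; simpl in *; try contradiction.
  split; [|split; [exact Hfin|]].
  - intros y Hy. specialize (Hlb y Hy). simpl in Hlb. auto.
  - intros eps He. apply Classical_Prop.NNPP. intros Hn.
    assert (Hb : Rbar_le (g + eps) g).
    { apply Hgl. intros y Hy. simpl. apply Rnot_lt_le. intros Hlt. apply Hn. exists y; auto. }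
    simpl in Hb. lra.
Qed.

Lemma lub_props (E : R -> Prop) M y0 : E y0 -> (forall y, E y -> y <= M) ->
  (forall y, E y -> y <= real (Lub_Rbar E)) /\
  (forall B, (forall y, E y -> y <= B) -> real (Lub_Rbar E) <= B).
Proof.
  intros H0 Hm. destruct (Lub_Rbar_correct E) as [Hub Hl].
  assert (Hfin : Rbar_le (Lub_Rbar E) M) by (apply Hl; intros y Hy; apply Hm; auto).
  assert (Hlo := Hub y0 H0).
  destruct (Lub_Rbar E) as [g| |] eqn:Eg; simpl in *; try contradiction.
  split.
  - intros y Hy. specialize (Hub y Hy). simpl in Hub. auto.
  - intros B HB. exact (Hl (Finite B) (fun y Hy => HB y Hy)).
Qed.

Section Main.
Variables tlo thi c qbar alpha qhat : R.
Variables P qe : R -> R.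
Hypothesis Htheta : 0 < tlo < thi.
Hypothesis Hqbar : 0 < qbar.
Hypothesis HPcont : forall x, 0 <= x <= qbar ->
     filterlim P (within (fun y => 0 <= y <= qbar) (locally x)) (locally (P x)).
Hypothesis HPdec : forall x y, 0 <= x -> x < y -> y <= qbar -> P y < P x.
Hypothesis Hqe : forall t, inTheta tlo thi t -> 0 <= qe t <= qbar /\ P (qe t) = t.
Hypothesis HA2 : TS P c thi (qe thi) > 0.
Hypothesis Hqhat : 0 < qhat <= qbar /\ V P qhat - qhat * P qhat = c.
Hypothesis Halpha : 0 <= alpha < 1.

Lemma HK : KEYP P qbar.
Proof. intros a b; apply KEY; auto. Qed.

Lemma qe_mono s t : tlo <= s -> s <= t -> t <= thi -> qe t <= qe s.
Proof.
  intros. destruct (Hqe s) as [[A1 A2] A3]. split; lra.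
  destruct (Hqe t) as [[B1 B2] B3]. split; lra.
  apply Rnot_lt_le; intros Hl. assert (P (qe t) < P (qe s)) by (apply HPdec; lra). lra.
Qed.

Lemma qhat_lt_qe t : inTheta tlo thi t -> qhat < qe t.
Proof.
  intros Ht. destruct (Hqe thi) as [B1 B2]. split; lra.
  assert (qhat < qe thi) by (apply (qe_gt P qbar c qhat HK HPdec Hqhat thi); auto).
  unfold inTheta in Ht. assert (qe thi <= qe t) by (apply qe_mono; lra). lra.
Qed.

Lemma GM (r0 q0 u0 y : R -> R) :
  ICIR tlo thi qbar r0 q0 u0 -> u0 thi = 0 ->
  (forall t, inTheta tlo thi t -> 0 <= y t <= qe t) ->
  (forall s t, tlo <= s -> s <= t -> t <= thi -> y t <= y s) ->
  y tlo = qe tlo ->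
  (forall t, tlo < t -> t <= thi -> filterlim y (at_left t) (locally (y t))) ->
  (forall t, inTheta tlo thi t -> q0 t * r0 t = y t /\ (0 < y t -> q0 t = Rmax (y t) qhat) /\
      (y t = 0 -> q0 t = 0 /\ r0 t = 0)) ->
  floor_randomized tlo thi qbar qhat r0 q0 u0 /\ left_continuous tlo thi r0 q0 /\ DD tlo thi qe q0.
Proof.
  intros Hic Hu Hb Hmo Htl Hlc Hf.
  assert (Hq0 := proj1 Hqhat).
  split; [|split].
  - split; auto. split; auto.
    exists (fun t => inTheta tlo thi t /\ qhat <= y t),
           (fun t => inTheta tlo thi t /\ 0 < y t < qhat),
           (fun t => inTheta tlo thi t /\ y t = 0).
    unfold inTheta in *.
    split; [|split; [|split; [|split; [|split; [|split; [|split; [|split; [|split; [|split; [|split]]]]]]]]]].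
    + intros a b w [Ha Ha'] [Hb' Hb2] Hw. split. lra.
      assert (y b <= y w) by (apply Hmo; lra). lra.
    + intros a b w [Ha Ha'] [Hb' Hb2] Hw. split. lra.
      assert (y b <= y w) by (apply Hmo; lra). assert (y w <= y a) by (apply Hmo; lra). lra.
    + intros a b w [Ha Ha'] [Hb' Hb2] Hw. split. lra.
      assert (y w <= y a) by (apply Hmo; lra). assert (0 <= y w) by (apply Hb; lra). lra.
    + intros t. split.
      * intros Ht. assert (0 <= y t) by (apply Hb; auto).
        destruct (Rle_dec qhat (y t)); [left; auto|].
        destruct (Req_dec (y t) 0); [right; right; auto|right; left; split; auto; lra].
      * intros [[A _]|[[A _]|[A _]]]; auto.
    + intros t [[_ A] [_ B]]. lra.
    + intros t [[_ A] [_ B]]. lra.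
    + intros t [[_ A] [_ B]]. lra.
    + intros a b [Ha A] [Hb' B]. apply Rnot_le_lt. intros Hl.
      assert (y b <= y a) by (apply Hmo; lra). lra.
    + intros a b [Ha A] [Hb' B]. apply Rnot_le_lt. intros Hl.
      assert (y b <= y a) by (apply Hmo; lra). lra.
    + intros t [Ht A]. destruct (Hf t Ht) as [F1 [F2 _]].
      rewrite F2 by lra. rewrite Rmax_left by lra. split; [lra|].
      rewrite F2 in F1 by lra. rewrite Rmax_left in F1 by lra.
      apply Rmult_eq_reg_l with (y t); lra.
    + intros t [Ht A]. destruct (Hf t Ht) as [F1 [F2 _]].
      rewrite F2 by lra. rewrite Rmax_right by lra. split; [lra|].
      rewrite F2 in F1 by lra. rewrite Rmax_right in F1 by lra.
      assert (E : r0 t = y t / qhat) by (apply (Rmult_eq_reg_l qhat); [field_simplify; lra|lra]).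
      rewrite E. split. apply Rdiv_lt_0_compat; lra.
      apply (Rmult_lt_reg_r qhat); [lra|]. field_simplify; lra.
    + intros t [Ht A]. destruct (Hf t Ht) as [_ [_ F3]]. auto.
  - intros t [H1 H2].
    assert (Ht : inTheta tlo thi t) by (split; lra).
    rewrite (proj1 (Hf t Ht)).
    apply (filterlim_ext_loc y).
    + assert (Hd : 0 < t - tlo) by lra. exists (mkposreal _ Hd).
      intros s Hs Hst. simpl in Hs. rewrite ball_R in Hs. unfold Rabs in Hs.
      destruct Rcase_abs in Hs; try lra.
      symmetry. apply (proj1 (Hf s ltac:(split; lra))).
    + apply Hlc; auto.
  - unfold DD; split.
    + intros t Ht. destruct (Hf t Ht) as [_ [F2 F3]]. assert (Hy := Hb t Ht).
      destruct (Req_dec (y t) 0) as [E|E].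
      * rewrite (proj1 (F3 E)). lra.
      * rewrite F2 by lra. assert (qhat < qe t) by (apply qhat_lt_qe; auto).
        unfold Rmax; destruct Rle_dec; lra.
    + assert (Ht : inTheta tlo thi tlo) by (split; lra).
      destruct (Hf tlo Ht) as [_ [F2 _]].
      assert (qhat < qe tlo) by (apply qhat_lt_qe; auto).
      rewrite F2 by lra. rewrite Htl. rewrite Rmax_left by lra. auto.
Qed.

Section Mech.
Variables r q u : R -> R.
Hypothesis HM : ICIR tlo thi qbar r q u.

Definition x t := q t * r t.
Definition x1 t := Rmin (x t) (qe t).
Definition Gset t := fun y => exists s, tlo <= s < t /\ y = x1 s.
Definition xp t := if Rlt_dec tlo t then real (Glb_Rbar (Gset t)) else qe tlo.

Lemma x_bounds t : inTheta tlo thi t -> 0 <= x t <= qbar.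
Proof.
  intros Ht. destruct HM as [Hm _]. destruct (Hm t Ht) as [[R1 R2] [[Q1 Q2] _]].
  unfold x. split. apply Rmult_le_pos; lra. nra.
Qed.

Lemma IC_x a b : inTheta tlo thi a -> inTheta tlo thi b -> a < b ->
  (b - a) * x b <= u a - u b <= (b - a) * x a.
Proof.
  intros Ha Hb Hab. destruct HM as [_ [Hic _]].
  assert (I1 := Hic a b Ha Hb). assert (I2 := Hic b a Hb Ha). unfold x. nra.
Qed.

Lemma x_mono s t : tlo <= s -> s <= t -> t <= thi -> x t <= x s.
Proof.
  intros. destruct (Req_dec s t) as [->|Hne]. lra.
  assert (Hi := IC_x s t ltac:(split; lra) ltac:(split; lra) ltac:(lra)).
  apply Rmult_le_reg_l with (t - s); lra.
Qed.

Lemma x1_bounds t : inTheta tlo thi t -> 0 <= x1 t <= qe t.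
Proof.
  intros Ht. assert (A := x_bounds t Ht). destruct (Hqe t Ht) as [B _].
  unfold x1, Rmin. destruct Rle_dec; lra.
Qed.

Lemma x1_mono s t : tlo <= s -> s <= t -> t <= thi -> x1 t <= x1 s.
Proof.
  intros. assert (A := x_mono s t H H0 H1). assert (B := qe_mono s t H H0 H1).
  unfold x1, Rmin. repeat destruct Rle_dec; lra.
Qed.

Lemma xp_glb t : tlo < t -> t <= thi ->
  (forall y, Gset t y -> xp t <= y) /\ 0 <= xp t /\
  (forall eps, 0 < eps -> exists y, Gset t y /\ y < xp t + eps).
Proof.
  intros H1 H2. unfold xp. destruct (Rlt_dec tlo t); [|lra].
  apply (glb_props (Gset t) 0 (x1 tlo)).
  - exists tlo. split; auto; lra.
  - intros y [s [Hs ->]]. apply x1_bounds. split; lra.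
Qed.

Lemma xp_le t s : tlo < t -> t <= thi -> tlo <= s < t -> xp t <= x1 s.
Proof. intros. destruct (xp_glb t) as [A _]; auto. apply A. exists s; auto. Qed.

Lemma xp_tlo : xp tlo = qe tlo.
Proof. unfold xp. destruct Rlt_dec; lra. Qed.

Lemma xp_ge_x1 t : inTheta tlo thi t -> x1 t <= xp t.
Proof.
  intros [H1 H2]. destruct (Req_dec t tlo) as [->|Hne].
  - rewrite xp_tlo. apply x1_bounds. split; lra.
  - destruct (xp_glb t) as [_ [_ A]]; try lra.
    apply Rnot_lt_le. intros Hl.
    destruct (A (x1 t - xp t)) as [y [[s [Hs ->]] Hy]]; try lra.
    assert (x1 t <= x1 s) by (apply x1_mono; lra). lra.
Qed.

Lemma xp_nonneg t : inTheta tlo thi t -> 0 <= xp t.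
Proof.
  intros Ht. assert (A := xp_ge_x1 t Ht). assert (B := x1_bounds t Ht). lra.
Qed.

Lemma xp_le_qe t : inTheta tlo thi t -> xp t <= qe t.
Proof.
  intros [H1 H2]. destruct (Req_dec t tlo) as [->|Hne].
  - rewrite xp_tlo. lra.
  - apply Rnot_lt_le. intros Hl. set (y := xp t) in *.
    assert (Hy1 : y <= x1 tlo) by (apply xp_le; lra).
    assert (Hy2 : x1 tlo <= qe tlo) by (apply x1_bounds; split; lra).
    destruct (Hqe tlo) as [[E1 E2] _]. split; lra.
    destruct (Hqe t) as [[F1 F2] F3]. split; lra.
    assert (Pl : P y < P (qe t)) by (apply HPdec; lra). rewrite F3 in Pl.
    set (s := Rmax tlo ((P y + t) / 2)).
    assert (Hs1 : tlo <= s) by (unfold s; apply Rmax_l).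
    assert (Hs2 : s < t) by (unfold s, Rmax; destruct Rle_dec; lra).
    assert (Hs3 : P y < s) by (unfold s, Rmax; destruct Rle_dec; lra).
    assert (Hys : y <= qe s).
    { assert (y <= x1 s) by (apply xp_le; lra).
      assert (x1 s <= qe s) by (apply x1_bounds; split; lra). lra. }
    destruct (Hqe s) as [[G1 G2] G3]. split; lra.
    destruct (Req_dec y (qe s)) as [Heq|Hne2].
    + rewrite <- Heq in G3. lra.
    + assert (P (qe s) < P y) by (apply HPdec; lra). lra.
Qed.

Lemma xp_mono s t : tlo <= s -> s <= t -> t <= thi -> xp t <= xp s.
Proof.
  intros H1 H2 H3. destruct (Req_dec s t) as [->|Hne]. lra.
  destruct (Req_dec s tlo) as [->|Hne2].
  - rewrite xp_tlo. assert (xp t <= x1 tlo) by (apply xp_le; lra).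
    assert (x1 tlo <= qe tlo) by (apply x1_bounds; split; lra). lra.
  - destruct (xp_glb s) as [_ [_ A]]; try lra.
    apply Rnot_lt_le. intros Hl.
    destruct (A (xp t - xp s)) as [y [[s' [Hs' ->]] Hy]]; try lra.
    assert (xp t <= x1 s') by (apply xp_le; lra). lra.
Qed.

Lemma xp_le_x s t : tlo <= s -> s < t -> t <= thi -> xp t <= x s.
Proof.
  intros. assert (xp t <= x1 s) by (apply xp_le; lra).
  assert (x1 s <= x s) by (unfold x1; apply Rmin_l). lra.
Qed.

Lemma xp_lc t : tlo < t -> t <= thi -> filterlim xp (at_left t) (locally (xp t)).
Proof.
  intros H1 H2. apply filterlim_locally. intros eps.
  destruct (xp_glb t) as [_ [_ A]]; auto.
  destruct (A eps (cond_pos eps)) as [y [[s0 [Hs0 ->]] Hy]].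
  assert (Hd : 0 < t - s0) by lra.
  exists (mkposreal _ Hd). intros s Hs Hst. simpl in Hs. rewrite ball_R in Hs |- *.
  unfold Rabs in Hs. destruct Rcase_abs in Hs; try lra.
  assert (xp t <= xp s) by (apply xp_mono; lra).
  assert (xp s <= x1 s0) by (apply xp_le; lra).
  unfold Rabs; destruct Rcase_abs; lra.
Qed.

Lemma u_ineq a b : tlo <= a -> a < b -> b <= thi -> (b - a) * xp b <= u a - u b.
Proof.
  intros Ha Hab Hb.
  assert (Hs : forall s, a < s < b -> (s - a) * xp b <= u a - u b).
  { intros s Hs.
    assert (I1 := IC_x a s ltac:(split; lra) ltac:(split; lra) ltac:(lra)).
    assert (I2 := IC_x s b ltac:(split; lra) ltac:(split; lra) ltac:(lra)).
    assert (X1 : xp b <= x s) by (apply xp_le_x; lra).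
    assert (X2 : 0 <= x b) by (apply x_bounds; split; lra).
    assert (X3 : 0 <= xp b) by (apply xp_nonneg; split; lra).
    assert ((s - a) * (x s - xp b) >= 0) by (apply Rle_ge, Rmult_le_pos; lra).
    assert ((b - s) * x b >= 0) by (apply Rle_ge, Rmult_le_pos; lra).
    nra. }
  set (D := u a - u b) in *. set (y := xp b) in *.
  assert (Hy : 0 <= y) by (apply xp_nonneg; split; lra).
  apply Rnot_lt_le. intros Hl.
  assert (Hy' : 0 < y).
  { destruct Hy as [|Hy]; auto. rewrite <- Hy in Hl.
    assert (Hm := Hs ((a + b) / 2) ltac:(lra)). rewrite <- Hy in Hm. lra. }
  set (d := ((b - a) * y - D) / (2 * y)).
  assert (Hd : 0 < d) by (unfold d; apply Rdiv_lt_0_compat; lra).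
  set (s := Rmax ((a + b) / 2) (b - d)).
  assert (Hsab : a < s < b) by (unfold s, Rmax; destruct Rle_dec; lra).
  assert (Hm := Hs s Hsab).
  assert (Hsd : b - d <= s) by (unfold s; apply Rmax_r).
  assert ((s - a) * y >= (b - d - a) * y) by (apply Rmult_ge_compat_r; lra).
  assert (E : (b - d - a) * y = (b - a) * y - ((b - a) * y - D) / 2).
  { unfold d. field. lra. }
  lra.
Qed.

Definition Ech th := fun y => exists l, cinc th l /\ clast th l = thi /\ y = csum xp th l.
Definition up th := real (Lub_Rbar (Ech th)).

Lemma xp_hyp a : tlo <= a -> forall s t, a <= s -> s <= t -> t <= thi -> 0 <= xp t <= xp s.
Proof. intros. split. apply xp_nonneg; split; lra. apply xp_mono; lra. Qed.

Lemma Ech_props th : inTheta tlo thi th ->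
  (forall y, Ech th y -> y <= up th) /\
  (forall B, (forall y, Ech th y -> y <= B) -> up th <= B).
Proof.
  intros [H1 H2]. unfold up.
  destruct (Req_dec th thi) as [->|Hne].
  - apply (lub_props _ 0 0).
    + exists nil. simpl. auto.
    + intros y [l [Hc [Hl ->]]]. destruct (cs_bound xp l thi Hc) as [_ B].
      rewrite Hl. apply xp_hyp; lra. rewrite Hl in B. lra.
  - apply (lub_props _ ((thi - th) * xp th) ((thi - th) * xp thi)).
    + exists (thi :: nil). simpl. split; [split; auto; lra|]. split; auto. ring.
    + intros y [l [Hc [Hl ->]]]. destruct (cs_bound xp l th Hc) as [_ B].
      rewrite Hl. apply xp_hyp; lra. rewrite Hl in B. lra.
Qed.

Lemma up_thi : up thi = 0.
Proof.
  destruct (Ech_props thi) as [A B]. split; lra.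
  apply Rle_antisym.
  - apply B. intros y [l [Hc [Hl ->]]]. destruct l as [|c0 l]. simpl; lra.
    simpl in Hc, Hl. destruct Hc as [Hc1 Hc2]. assert (Hx := clast_ge c0 l Hc2). lra.
  - apply A. exists nil. simpl. auto.
Qed.

Lemma up_IC1 t t' : tlo <= t -> t < t' -> t' <= thi -> up t >= up t' + (t' - t) * xp t'.
Proof.
  intros H1 H2 H3.
  destruct (Ech_props t) as [A _]. split; lra.
  destruct (Ech_props t') as [_ B]. split; lra.
  assert (up t' <= up t - (t' - t) * xp t').
  { apply B. intros y [l [Hc [Hl ->]]].
    assert (Ech t ((t' - t) * xp t' + csum xp t' l)).
    { exists (t' :: l). simpl. split; [split; auto|]. split; auto. }
    specialize (A _ H). lra. }
  lra.
Qed.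

Lemma up_IC2 t t' : tlo <= t -> t < t' -> t' <= thi -> up t <= up t' + (t' - t) * xp t.
Proof.
  intros H1 H2 H3.
  destruct (Ech_props t) as [_ B]. split; lra.
  destruct (Ech_props t') as [A _]. split; lra.
  apply B. intros y [l [Hc [Hl ->]]].
  destruct (cs_split xp l t t' Hc H2) as [l' [L1 [L2 L3]]].
  rewrite Hl; lra. rewrite Hl. apply xp_hyp; lra.
  assert (Ech t' (csum xp t' l')) by (exists l'; rewrite L2; auto).
  specialize (A _ H). lra.
Qed.

Lemma up_le_u t : inTheta tlo thi t -> up t <= u t - u thi.
Proof.
  intros [H1 H2]. destruct (Ech_props t) as [_ B]. split; lra.
  apply B. intros y [l [Hc [Hl ->]]]. rewrite <- Hl.
  apply (cs_tele xp u tlo thi l t Hc H1); [lra|].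
  intros; apply u_ineq; lra.
Qed.

Lemma up_nonneg t : inTheta tlo thi t -> 0 <= up t.
Proof.
  intros [H1 H2]. destruct (Req_dec t thi) as [->|Hne]. rewrite up_thi; lra.
  assert (A := up_IC1 t thi H1 ltac:(lra) ltac:(lra)). rewrite up_thi in A.
  assert (0 <= xp thi) by (apply xp_nonneg; split; lra).
  assert ((thi - t) * xp thi >= 0) by (apply Rle_ge, Rmult_le_pos; lra). lra.
Qed.

Definition qn t := if Rlt_dec 0 (xp t) then Rmax (xp t) qhat else 0.
Definition rn t := if Rlt_dec 0 (xp t) then xp t / Rmax (xp t) qhat else 0.

Lemma prod_n t : inTheta tlo thi t -> qn t * rn t = xp t.
Proof.
  intros Ht. assert (H0 := xp_nonneg t Ht). unfold qn, rn. destruct Rlt_dec.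
  - assert (0 < Rmax (xp t) qhat) by (unfold Rmax; destruct Rle_dec; lra). field; lra.
  - lra.
Qed.

Lemma new_ICIR : ICIR tlo thi qbar rn qn up.
Proof.
  assert (Hq0 := proj1 Hqhat).
  split; [|split].
  - intros t Ht. assert (H0 := xp_nonneg t Ht). assert (H1 := xp_le_qe t Ht).
    destruct (Hqe t Ht) as [[E1 E2] _].
    unfold qn, rn. destruct Rlt_dec.
    + assert (Hm : 0 < Rmax (xp t) qhat) by (unfold Rmax; destruct Rle_dec; lra).
      assert (Hm2 : xp t <= Rmax (xp t) qhat) by apply Rmax_l.
      split; [split|split; [split|split]].
      * left; apply Rdiv_lt_0_compat; lra.
      * apply (Rmult_le_reg_r (Rmax (xp t) qhat)); auto. field_simplify; lra.
      * lra.
      * unfold Rmax; destruct Rle_dec; lra.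
      * intros; lra.
      * intros Hz. exfalso. assert (0 < xp t / Rmax (xp t) qhat) by (apply Rdiv_lt_0_compat; lra). lra.
    + split; [lra|split; [lra|tauto]].
  - intros t t' Ht Ht'. rewrite Rmult_assoc, prod_n by auto.
    destruct Ht as [A1 A2]. destruct Ht' as [B1 B2].
    destruct (Rtotal_order t t') as [Hl|[He|Hg]].
    + apply up_IC1; auto.
    + subst. lra.
    + assert (I := up_IC2 t' t B1 Hg A2). lra.
  - intros t Ht. apply Rle_ge, up_nonneg; auto.
Qed.

Lemma new_W t : inTheta tlo thi t -> rn t * TS P c t (qn t) = W P c qhat t (xp t).
Proof.
  intros Ht. unfold rn, qn, W. destruct Rlt_dec; [|lra].
  unfold TS. destruct (Rlt_dec 0 (Rmax (xp t) qhat)) as [|n]; [reflexivity|].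
  exfalso; apply n. unfold Rmax; destruct Rle_dec; lra.
Qed.

Lemma old_W t : inTheta tlo thi t ->
  r t * TS P c t (q t) <= W P c qhat t (x t) /\
  (r t * TS P c t (q t) = W P c qhat t (x t) -> 0 < x t -> q t = Rmax (x t) qhat).
Proof.
  intros Ht. destruct HM as [Hm _]. destruct (Hm t Ht) as [[R1 R2] [[Q1 Q2] Hiff]].
  destruct (Req_dec (q t) 0) as [Hz|Hnz].
  - assert (Hr : r t = 0) by (apply Hiff; auto).
    unfold x. rewrite Hz, Hr, Rmult_0_l. unfold W, TS.
    repeat destruct Rlt_dec; try lra; split; intros; lra.
  - assert (Hr : r t <> 0) by (intros E; apply Hnz, Hiff; auto).
    destruct (C1 P qbar c qhat HK HPdec Hqhat t (q t) (r t)) as [C1a C1b]; try lra.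
    unfold x. split; auto.
Qed.

Lemma W_cmp t : inTheta tlo thi t ->
  W P c qhat t (x t) <= W P c qhat t (xp t) /\
  (x t <> xp t -> W P c qhat t (x t) < W P c qhat t (xp t)).
Proof.
  intros Ht. destruct (Hqe t Ht) as [[E1 E2] E3].
  assert (Hlt := qhat_lt_qe t Ht).
  assert (Xb := x_bounds t Ht). assert (X1 := xp_ge_x1 t Ht). assert (X2 := xp_le_qe t Ht).
  unfold x1, Rmin in X1. destruct (Rle_dec (x t) (qe t)) as [Hle|Hgt].
  - destruct (Req_dec (x t) (xp t)) as [He|Hne].
    + rewrite He. split; intros; [lra|congruence].
    + assert (W P c qhat t (x t) < W P c qhat t (xp t)).
      { apply (Wmono1 P qbar c qhat HK HPdec Hqhat t (qe t)); auto; lra. }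
      split; intros; lra.
  - assert (Hxp : xp t = qe t) by lra. rewrite Hxp.
    assert (W P c qhat t (x t) < W P c qhat t (qe t)).
    { apply (Wmono2 P qbar c qhat HK Hqhat t (qe t)); auto; lra. }
    split; intros; lra.
Qed.

Lemma RS_cmp t : inTheta tlo thi t ->
  RS P c alpha rn qn up t - RS P c alpha r q u t =
  (W P c qhat t (xp t) - r t * TS P c t (q t)) + (1 - alpha) * (u t - up t).
Proof. intros Ht. unfold RS. rewrite new_W by auto. ring. Qed.

Lemma RS_ge t : inTheta tlo thi t -> RS P c alpha rn qn up t >= RS P c alpha r q u t.
Proof.
  intros Ht. assert (E := RS_cmp t Ht).
  destruct (old_W t Ht) as [O1 _]. destruct (W_cmp t Ht) as [W1 _].
  assert (U1 := up_le_u t Ht).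
  destruct HM as [_ [_ Hir]]. assert (U2 := Hir thi ltac:(split; lra)).
  assert ((1 - alpha) * (u t - up t) >= 0) by (apply Rle_ge, Rmult_le_pos; lra).
  lra.
Qed.

Lemma new_good : floor_randomized tlo thi qbar qhat rn qn up /\ left_continuous tlo thi rn qn /\ DD tlo thi qe qn.
Proof.
  apply (GM rn qn up xp new_ICIR up_thi).
  - intros t Ht; split; [apply xp_nonneg|apply xp_le_qe]; auto.
  - apply xp_mono.
  - apply xp_tlo.
  - apply xp_lc.
  - intros t Ht. split; [apply prod_n; auto|]. split.
    + intros Hp. unfold qn. destruct Rlt_dec; lra.
    + intros Hz. unfold qn, rn. destruct Rlt_dec; [lra|]. auto.
Qed.

Lemma eq_case : (forall t, inTheta tlo thi t -> RS P c alpha rn qn up t <= RS P c alpha r q u t) ->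
  u thi = 0 /\ forall t, inTheta tlo thi t -> x t = xp t /\ (0 < x t -> q t = Rmax (x t) qhat).
Proof.
  intros Hle.
  assert (Key : forall t, inTheta tlo thi t ->
     W P c qhat t (xp t) = r t * TS P c t (q t) /\ u t - up t = 0).
  { intros t Ht. assert (E := RS_cmp t Ht). assert (L := Hle t Ht).
    destruct (old_W t Ht) as [O1 _]. destruct (W_cmp t Ht) as [W1 _].
    assert (U1 := up_le_u t Ht).
    destruct HM as [_ [_ Hir]]. assert (U2 := Hir thi ltac:(split; lra)).
    assert ((1 - alpha) * (u t - up t) >= 0) by (apply Rle_ge, Rmult_le_pos; lra).
    assert (W P c qhat t (xp t) = r t * TS P c t (q t)) by lra. split; auto.
    assert ((1 - alpha) * (u t - up t) = 0) by lra.
    destruct (Rmult_integral _ _ H1); lra. }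
  split.
  - destruct (Key thi) as [_ K]. split; lra. rewrite up_thi in K. lra.
  - intros t Ht. destruct (Key t Ht) as [K1 _].
    destruct (old_W t Ht) as [O1 O2]. destruct (W_cmp t Ht) as [W1 W2].
    assert (Hx : x t = xp t).
    { destruct (Req_dec (x t) (xp t)); auto. specialize (W2 H). lra. }
    split; auto. intros Hp. apply O2; auto. lra.
Qed.

End Mech.

Lemma part1 r q u : ICIR tlo thi qbar r q u -> undominated tlo thi qbar P c alpha r q u ->
  floor_randomized tlo thi qbar qhat r q u /\ left_continuous tlo thi r q /\ DD tlo thi qe q.
Proof.
  intros HM [_ Hnd].
  assert (Hle : forall t, inTheta tlo thi t ->
     RS P c alpha (rn r q) (qn r q) (up r q) t <= RS P c alpha r q u t).
  { intros t Ht. apply Rnot_lt_le. intros Hl. apply Hnd.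
    exists (rn r q), (qn r q), (up r q). split; [apply (new_ICIR r q u HM)|].
    split; auto. split.
    - intros; apply (RS_ge r q u HM); auto.
    - exists t; split; auto. }
  destruct (eq_case r q u HM Hle) as [Hu Hx].
  apply (GM r q u (xp r q) HM Hu).
  - intros t Ht; split; [apply (xp_nonneg r q u HM)|apply (xp_le_qe r q u HM)]; auto.
  - apply (xp_mono r q u HM).
  - apply xp_tlo.
  - apply (xp_lc r q u HM).
  - intros t Ht. destruct (Hx t Ht) as [E1 E2]. unfold x in E1, E2.
    split; auto. split.
    + intros Hp. rewrite <- E1. apply E2. lra.
    + intros Hz. destruct HM as [Hm _]. destruct (Hm t Ht) as [_ [_ Hiff]].
      rewrite Hz in E1. destruct (Rmult_integral _ _ E1) as [A|A].
      * split; auto. apply Hiff; auto.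
      * split; auto. apply Hiff; auto.
Qed.

Lemma part2 r q u : ICIR tlo thi qbar r q u -> dominated tlo thi qbar P c alpha r q u ->
  exists r' q' u' : R -> R,
       dominates tlo thi qbar P c alpha r' q' u' r q u /\
       floor_randomized tlo thi qbar qhat r' q' u' /\
       left_continuous tlo thi r' q' /\ DD tlo thi qe q'.
Proof.
  intros HM [r1 [q1 [u1 [H1 [H2 [H3 [t [Ht H4]]]]]]]].
  exists (rn r1 q1), (qn r1 q1), (up r1 q1).
  split; [|apply (new_good r1 q1 u1 H1)].
  split; [apply (new_ICIR r1 q1 u1 H1)|]. split; auto. split.
  - intros s Hs. assert (A := RS_ge r1 q1 u1 H1 s Hs). assert (B := H3 s Hs). lra.
  - exists t. split; auto. assert (A := RS_ge r1 q1 u1 H1 t Ht). lra.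
Qed.

End Main.

Theorem theorem2
  (tlo thi c qbar alpha qhat : R) (P qe : R -> R)
  (Htheta : 0 < tlo < thi)
  (Hc : 0 < c)
  (Hqbar : 0 < qbar)
  (HPcont : forall x, 0 <= x <= qbar ->
     filterlim P (within (fun y => 0 <= y <= qbar) (locally x)) (locally (P x)))
  (HPdec : forall x y, 0 <= x -> x < y -> y <= qbar -> P y < P x)
  (HPqbar : P qbar = 0)
  (* qe = P^{-1} on Theta: the efficient quantity *)
  (Hqe : forall t, inTheta tlo thi t -> 0 <= qe t <= qbar /\ P (qe t) = t)
  (* Assumption (A2) *)
  (HA2 : TS P c thi (qe thi) > 0)
  (* qhat is the quantity floor: V(qhat) - qhat P(qhat) = c *)
  (Hqhat : 0 < qhat <= qbar /\ V P qhat - qhat * P qhat = c)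
  (Halpha : 0 <= alpha < 1)
  (r q u : R -> R)
  (HM : ICIR tlo thi qbar r q u) :
  (undominated tlo thi qbar P c alpha r q u ->
     floor_randomized tlo thi qbar qhat r q u /\
     left_continuous tlo thi r q /\ DD tlo thi qe q) /\
  (dominated tlo thi qbar P c alpha r q u ->
     exists r' q' u' : R -> R,
       dominates tlo thi qbar P c alpha r' q' u' r q u /\
       floor_randomized tlo thi qbar qhat r' q' u' /\
       left_continuous tlo thi r' q' /\ DD tlo thi qe q').
Proof.
  split; intros H.
  - eapply part1; eauto.
  - eapply part2; eauto.
Qed.
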